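(* Let $(X,\mathcal T,P,\leq,\{\sigma_x:x\in X\})$ be a typed topological space with $X$ finite. For any subset $D\subseteq X$ and any type $p\in P$ there exists a subset $port_p(D)\subseteq D$ such that (1) $D\subseteq p\vdash tr(port_p(D))$, and (2) for every two distinct points $z,w\in port_p(D)$, both $z\notin p\vdash tr(\{w\})$ and $w\notin p\vdash tr(\{z\})$.
   Context: A typed topological space $(X,\mathcal T,P,\leq,\{\sigma_x:x\in X\})$ consists of a topological space $(X,\mathcal T)$, a partially ordered set $(P,\leq)$ of types, and for each $x\in X$ a partial function $\sigma_x:\{O\in\mathcal T:x\in O\}\to P$ such that for all $U,V$ in its domain, $\sigma_x(U)\leq\sigma_x(V)$ iff $U\subseteq V$. $U$ is a type-$p$ neighborhood of $x$ if $U$ is in the domain of $\sigma_x$ and $\sigma_x(U)=p$. $x$ is a $p$-accumulation point of $A$ if every type-$p$ neighborhood of $x$ meets $A$. $p\vdash CL_1(A)=A\cup\{p\text{-accumulation points of }A\}$, $p\vdash CL_n(A)=p\vdash CL_1(p\vdash CL_{n-1}(A))$, $p\vdash tr(A)=\bigcup_{n\ge1}p\vdash CL_n(A)$. *)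

(* Defs.v *)
From mathcomp Require Import all_boot all_order.
Set Implicit Arguments. Unset Strict Implicit. Unset Printing Implicit Defensive.
Import Order.Theory.
Local Open Scope order_scope.

(* A topology on a finite type: a family of open sets containing set0, setT,
   closed under binary unions and intersections (for finite X, closure under
   binary unions is equivalent to closure under arbitrary unions). *)
Definition is_topology (X : finType) (T : {set {set X}}) : Prop :=
  [/\ set0 \in T, setT \in T,
      (forall U V, U \in T -> V \in T -> U :|: V \in T) &
      (forall U V, U \in T -> V \in T -> U :&: V \in T)].

(* sigma x is a partial function from open neighbourhoods of x to types P:
   sigma x U = None means U is not in the domain of sigma_x. *)
Definition is_typed_topology (X : finType) (d : Order.disp_t) (P : porderType d)
    (T : {set {set X}}) (sigma : X -> {set X} -> option P) : Prop :=
  [/\ is_topology T,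
      (forall x U p, sigma x U = Some p -> U \in T /\ x \in U) &
      (forall x U V p q, sigma x U = Some p -> sigma x V = Some q ->
         (p <= q) = (U \subset V))].

Definition CL1 (X : finType) (d : Order.disp_t) (P : porderType d)
    (sigma : X -> {set X} -> option P) (p : P) (A : {set X}) : {set X} :=
  A :|: [set x | [forall U : {set X}, (sigma x U == Some p) ==> (U :&: A != set0)]].

Definition CLn (X : finType) (d : Order.disp_t) (P : porderType d)
    (sigma : X -> {set X} -> option P) (p : P) (n : nat) (A : {set X}) : {set X} :=
  iter n (CL1 sigma p) A.

Definition in_tr (X : finType) (d : Order.disp_t) (P : porderType d)
    (sigma : X -> {set X} -> option P) (p : P) (A : {set X}) (x : X) : Prop :=
  exists n : nat, (1 <= n)%N /\ x \in CLn sigma p n A.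

(* Main.v *)
From Stdlib Require Import ClassicalEpsilon.

Require Import Defs.
From mathcomp Require Import all_boot all_order.

Set Implicit Arguments. Unset Strict Implicit.
Section Aux.
Variables (X : finType) (d : Order.disp_t) (P : porderType d)
  (sigma : X -> {set X} -> option P) (p : P).

Lemma CL1_sub (A : {set X}) : A \subset CL1 sigma p A.
Proof. exact: subsetUl. Qed.

Lemma CL1_mono (A B : {set X}) : A \subset B -> CL1 sigma p A \subset CL1 sigma p B.
Proof.
move=> AB; apply/subsetP => x; rewrite /CL1 !inE => /orP [xA|].
  by rewrite (subsetP AB x xA).
move=> /forallP H; apply/orP; right; apply/forallP => U.
apply/implyP => /(implyP (H U)); apply: contra => /eqP E.
by rewrite -subset0 -E setIS.
Qed.

Lemma CLn_mono n (A B : {set X}) : A \subset B -> CLn sigma p n A \subset CLn sigma p n B.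
Proof. by elim: n => //= n IH AB; apply: CL1_mono; apply: IH. Qed.

Definition R x y := in_tr sigma p [set y] x.

Lemma R_refl x : R x x.
Proof. by exists 1; split => //=; apply: (subsetP (CL1_sub _)); rewrite inE. Qed.

Lemma R_trans x y z : R x y -> R y z -> R x z.
Proof.
move=> [n [n1 Hn]] [m [m1 Hm]]; exists (n + m); split.
  by apply: leq_trans n1 (leq_addr _ _).
have S : [set y] \subset CLn sigma p m [set z].
  by apply/subsetP => u; rewrite inE => /eqP ->.
have := subsetP (CLn_mono n S) x Hn.
by rewrite /CLn iterD.
Qed.

Definition Rb x y : bool := if excluded_middle_informative (R x y) then true else false.
Lemma RbP x y : reflect (R x y) (Rb x y).
Proof. by rewrite /Rb; case: excluded_middle_informative => H; constructor. Qed.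
End Aux.

Theorem lemma3p5 (X : finType) (d : Order.disp_t) (P : porderType d)
    (T : {set {set X}}) (sigma : X -> {set X} -> option P) :
  is_typed_topology T sigma ->
  forall (D : {set X}) (p : P),
    exists port : {set X},
      port \subset D /\
      (forall x, x \in D -> in_tr sigma p port x) /\
      (forall z w, z \in port -> w \in port -> z != w ->
         ~ in_tr sigma p [set w] z /\ ~ in_tr sigma p [set z] w).
Proof.
move=> _ D p.
pose Rb' := Rb sigma p.
pose port := [set w in D | [forall x in D, Rb' w x ==> Rb' x w] &&
   [forall x in D, (Rb' w x && Rb' x w) ==> (enum_rank w <= enum_rank x)%N]].
have antich : forall z w, z \in port -> w \in port -> R sigma p z w -> z = w.
  move=> z w; rewrite !inE => /andP [zD /andP [/forallP zM /forallP zR]].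
  move=> /andP [wD /andP [_ /forallP wR]] Hzw.
  have Hwz : R sigma p w z.
    have b1 : Rb' z w by apply/RbP.
    by have := implyP (zM w) wD; rewrite b1 => /= /RbP.
  apply: enum_rank_inj; apply: val_inj; apply/eqP; rewrite /= eqn_leq.
  have b1 : Rb' z w by apply/RbP.
  have b2 : Rb' w z by apply/RbP.
  have := implyP (zR w) wD; rewrite b1 b2 => /= ->.
  by have := implyP (wR z) zD; rewrite b1 b2.
exists port; split; first by apply/subsetP => w; rewrite inE => /andP [].
split; last first.
  move=> z w zP wP zw; split => H.
    by move/eqP: zw; apply; apply: antich.
  by move/eqP: zw; apply; symmetry; apply: antich.
move=> x xD.
pose up y := [set u in D | Rb' y u].
have Px : (x \in D) && Rb' x x by rewrite xD; apply/RbP; apply: R_refl.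
case: (@arg_minnP _ x (fun y => (y \in D) && Rb' x y) (fun y => #|up y|) Px) => y /andP [yD Rxy] ymin.
have ymax : forall u, u \in D -> R sigma p y u -> R sigma p u y.
  move=> u uD Ryu.
  have sub : up u \subset up y.
    apply/subsetP => v; rewrite !inE => /andP [vD /RbP Ruv]; rewrite vD /=.
    by apply/RbP; apply: R_trans Ryu Ruv.
  have uP : (u \in D) && Rb' x u.
    by rewrite uD; apply/RbP; apply: R_trans (RbP _ _ _ _ Rxy) Ryu.
  have := ymin u uP => le; have E : up u = up y.
    by apply/eqP; rewrite eqEcard sub le.
  have : y \in up u by rewrite E inE yD; apply/RbP; apply: R_refl.
  by rewrite inE => /andP [_ /RbP].
have Py : (y \in D) && (Rb' y y && Rb' y y).
  have b : Rb' y y by apply/RbP; apply: R_refl.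
  by rewrite yD b.
case: (@arg_minnP _ y (fun w => (w \in D) && (Rb' y w && Rb' w y)) (fun w => enum_rank w : nat) Py) => w /andP [wD /andP [/RbP Ryw /RbP Rwy]] wmin.
have wP : w \in port.
  rewrite inE wD /=; apply/andP; split; apply/forallP => v; apply/implyP => vD; apply/implyP.
    move=> /RbP Rwv; apply/RbP; apply: R_trans (ymax v vD (R_trans Ryw Rwv)) Ryw.
  move=> /andP [/RbP Rwv /RbP Rvw]; apply: wmin.
  have b1 : Rb' y v by apply/RbP; apply: R_trans Ryw Rwv.
  have b2 : Rb' v y by apply/RbP; apply: R_trans Rvw Rwy.
  by rewrite vD b1 b2.
have [n [n1 Hn]] : R sigma p x w by apply: R_trans (RbP _ _ _ _ Rxy) Ryw.
have S : [set w] \subset port by apply/subsetP => u; rewrite inE => /eqP ->.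
exists n; split => //; exact: (subsetP (CLn_mono sigma p n S) x Hn).
Qed.
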